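(* Let $G$ be a simple undirected graph on $\{1,\dots,n\}$ with adjacency $g_{ij}$ and degrees $d_i$. Let the exposure be binary, $e_i=I\big(\sum_jg_{ij}z_j>0\big)$, and suppose $Y_i(z_i,e_i)=\alpha_i+\beta_iz_i+\gamma_ie_i$. Under a completely randomized design with $n_t$ treated and $n_c=n-n_t\ge1$ control units ($n_t\ge1$), if $n_c<\min_id_i$ then the estimator $$\hat\beta_{naive}=\frac{\sum_i Y_i^{obs}Z_i}{\sum_i Z_i}-\frac{\sum_i Y_i^{obs}(1-Z_i)}{\sum_i(1-Z_i)}$$ is unbiased for $\mathrm{DTE}=\frac1n\sum_i\big(Y_i(1,0)-Y_i(0,0)\big)$, i.e. $\mathbb E[\hat\beta_{naive}]=\mathrm{DTE}$.
   Context: Completely randomized design: $\mathbf Z$ is uniform over vectors in $\{0,1\}^n$ with exactly $n_t$ ones. $E_i=I(\sum_jg_{ij}Z_j>0)$ and $Y_i^{obs}=Y_i(Z_i,E_i)$. *)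

(* Defs.v *)
From HB Require Import structures.
From mathcomp Require Import all_boot all_order all_algebra.
Set Implicit Arguments. Unset Strict Implicit. Unset Printing Implicit Defensive.
Import Order.TTheory GRing.Theory Num.Theory.
Local Open Scope ring_scope.

(* Units are 'I_n (i.e. {0,...,n-1} standing for {1,...,n}).
   A treatment assignment is z : {ffun 'I_n -> bool}. *)

Definition simple_graph (n : nat) (g : rel 'I_n) : Prop :=
  symmetric g /\ irreflexive g.

Definition degree (n : nat) (g : rel 'I_n) (i : 'I_n) : nat := #|[set j | g i j]|.

Definition exposure (n : nat) (g : rel 'I_n) (z : {ffun 'I_n -> bool}) (i : 'I_n) : bool :=
  (0 < \sum_(j < n) (g i j : nat) * (z j : nat))%N.

Definition crd (n nt : nat) : {set {ffun 'I_n -> bool}} :=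
  [set z : {ffun 'I_n -> bool} | #|[set i | z i]| == nt].

Definition crd_expect (R : fieldType) (n nt : nat) (f : {ffun 'I_n -> bool} -> R) : R :=
  (\sum_(z in crd n nt) f z) / #|crd n nt|%:R.

Definition Yobs (R : ringType) (n : nat) (g : rel 'I_n) (alpha beta gamma : 'I_n -> R)
  (z : {ffun 'I_n -> bool}) (i : 'I_n) : R :=
  alpha i + beta i * (z i)%:R + gamma i * (exposure g z i)%:R.

Definition beta_naive (R : fieldType) (n : nat) (g : rel 'I_n) (alpha beta gamma : 'I_n -> R)
  (z : {ffun 'I_n -> bool}) : R :=
  (\sum_(i < n) Yobs g alpha beta gamma z i * (z i)%:R) / (\sum_(i < n) (z i)%:R)
  - (\sum_(i < n) Yobs g alpha beta gamma z i * (1 - (z i)%:R)) / (\sum_(i < n) (1 - (z i)%:R)).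

Definition DTE (R : fieldType) (n : nat) (alpha beta gamma : 'I_n -> R) : R :=
  (n%:R)^-1 * \sum_(i < n) ((alpha i + beta i * 1 + gamma i * 0)
                            - (alpha i + beta i * 0 + gamma i * 0)).

(* Main.v *)
Require Import Defs.
From HB Require Import structures.
From mathcomp Require Import all_boot all_order all_algebra all_fingroup ring.
Import Order.TTheory GRing.Theory Num.Theory.
Local Open Scope ring_scope.

Lemma card_tperm (n : nat) (i j : 'I_n) (z : {ffun 'I_n -> bool}) :
  #|[set k | z (tperm i j k)]| = #|[set k | z k]|.
Proof.
rewrite -!sum1_card (reindex_inj (@perm_inj _ (tperm i j))) /=.
by apply: eq_bigl => k; rewrite !inE tpermK.
Qed.

Lemma C_sym (R : ringType) (n nt : nat) (i j : 'I_n) :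
  \sum_(z in crd n nt) ((z i)%:R : R) = \sum_(z in crd n nt) (z j)%:R.
Proof.
pose h (z : {ffun 'I_n -> bool}) := [ffun k => z (tperm i j k)].
have hinj : injective h.
  move=> z1 z2 /ffunP E; apply/ffunP => k.
  by have := E (tperm i j k); rewrite !ffunE tpermK.
rewrite (reindex_inj hinj) /=.
apply: eq_big => z.
  rewrite !inE; congr (_ == _).
  rewrite -(@card_tperm _ i j z); apply: eq_card => k; by rewrite !inE ffunE.
by rewrite ffunE tpermL.
Qed.

Lemma sum_z (R : ringType) (n nt : nat) (z : {ffun 'I_n -> bool}) :
  z \in crd n nt -> \sum_(i < n) ((z i)%:R : R) = nt%:R.
Proof.
rewrite inE => /eqP <-.
rewrite -sum1_card -natr_sum big_mkcond /=; congr (_%:R).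
rewrite [RHS]big_mkcond /=; apply: eq_bigr => i _; rewrite inE; by case: (z i).
Qed.

Lemma C_val (R : fieldType) (n nt : nat) (i : 'I_n) :
  n%:R != 0 :> R ->
  \sum_(z in crd n nt) ((z i)%:R : R) = nt%:R * #|crd n nt|%:R / n%:R.
Proof.
move=> n0.
have E1 : \sum_(j < n) \sum_(z in crd n nt) ((z j)%:R : R)
          = n%:R * \sum_(z in crd n nt) ((z i)%:R : R).
  rewrite (eq_bigr (fun _ => \sum_(z in crd n nt) ((z i)%:R : R))); last first.
    by move=> j _; apply: C_sym.
  by rewrite sumr_const card_ord mulr_natl.
have E2 : \sum_(j < n) \sum_(z in crd n nt) ((z j)%:R : R) = nt%:R * #|crd n nt|%:R.
  rewrite exchange_big /= (eq_bigr (fun _ => (nt%:R : R))); last first.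
    by move=> z zin; apply: sum_z.
  by rewrite sumr_const mulr_natr.
rewrite -E2 E1; field; done.
Qed.

Lemma expo (n nt : nat) (g : rel 'I_n) (z : {ffun 'I_n -> bool}) (i : 'I_n) :
  z \in crd n nt -> (n - nt < degree g i)%N -> exposure g z i.
Proof.
move=> zin hd; rewrite /exposure.
case: (pickP (fun j => g i j && z j)) => [j /andP[gij zj]|H].
  by rewrite (bigD1 j) //= gij zj.
exfalso; move: hd; apply/negP; rewrite -leqNgt /degree.
move: zin; rewrite inE => /eqP <-.
have sub : [set j | g i j] \subset ~: [set j | z j].
  apply/subsetP => j; rewrite !inE => gij.
  by move: (H j) => /=; rewrite gij /= => ->.
apply: leq_trans (subset_leq_card sub) _.
by rewrite cardsCs setCK card_ord.
Qed.

Theorem proposition16 (R : realFieldType) (n nt : nat) (g : rel 'I_n)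
  (alpha beta gamma : 'I_n -> R) :
  simple_graph g ->
  (1 <= nt)%N -> (1 <= n - nt)%N ->
  (forall i : 'I_n, (n - nt < degree g i)%N) ->
  crd_expect nt (beta_naive g alpha beta gamma) = DTE alpha beta gamma.
Proof.
move=> _ h1 h2 hd.
have ntn : (nt <= n)%N by apply: ltnW; rewrite -subn_gt0.
have n0 : n%:R != 0 :> R by rewrite pnatr_eq0 -lt0n; apply: leq_trans h1 ntn.
have nt0 : nt%:R != 0 :> R by rewrite pnatr_eq0 -lt0n.
have m0 : n%:R - nt%:R != 0 :> R by rewrite -natrB // pnatr_eq0 -lt0n.
have K0 : #|crd n nt|%:R != 0 :> R.
  rewrite pnatr_eq0 -lt0n; apply/card_gt0P.
  exists [ffun k : 'I_n => (k < nt)%N]; rewrite inE; apply/eqP.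
  rewrite -sum1_card big_mkcond /=.
  rewrite (eq_bigr (fun k : 'I_n => (k < nt : nat)%N)); last first.
    by move=> k _; rewrite inE ffunE; case: (k < nt)%N.
  rewrite -(big_mkcond (fun k : 'I_n => (k < nt)%N) (fun _ => 1%N)) /=.
  rewrite -(big_ord_widen_cond n (fun _ => true) (fun _ => 1%N) ntn) /=.
  by rewrite sum1_card card_ord.
have key : forall z, z \in crd n nt -> beta_naive g alpha beta gamma z =
   (\sum_(i < n) (alpha i + beta i + gamma i) * (z i)%:R) / nt%:R
   - (\sum_(i < n) (alpha i + gamma i) * (1 - (z i)%:R)) / (n%:R - nt%:R).
  move=> z zin; rewrite /beta_naive (sum_z _ _ _ _ zin) sumrB sumr_const card_ord (sum_z _ _ _ _ zin).
  congr (_ / _ - _ / _); apply: eq_bigr => i _;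
    rewrite /Yobs (@expo _ _ g _ _ zin (hd i));
    case: (z i) => /=; ring.
rewrite /crd_expect (eq_bigr _ key) sumrB -!mulr_suml.
rewrite exchange_big /=.
under eq_bigr => i _ do rewrite -mulr_sumr (@C_val _ _ nt _ n0).
rewrite [X in _ - X / _]exchange_big /=.
under [X in _ - X / _]eq_bigr => i _ do rewrite -mulr_sumr sumrB sumr_const (@C_val _ _ nt _ n0).
rewrite -!mulr_suml !big_split /= /DTE.
rewrite [in RHS](eq_bigr (fun i => beta i)); last by move=> i _; ring.
set K := #|crd n nt|%:R.
field; by rewrite n0 K0 m0 nt0.
Qed.
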